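(* Let $k$ be a field, $n\ge 5$ an integer, $q\in k$ a primitive $n$-th root of unity, and $\ell=n$ if $n$ is odd, $\ell=n/2$ if $n$ is even. Let $\mathcal{C}=(a_{ij})_{t\times t}$ be the Cartan matrix of a finite-dimensional semisimple simply laced Lie algebra. Let $\mathfrak{u}_q(\mathcal{C})$ and $\mathfrak{u}_q^{\mathcal{C}}$ be the Hopf algebras described in the context. For $x\in\mathbb{Z}_n^t$ put $\epsilon_x=\frac{1}{n^t}\sum_{y\in\mathbb{Z}_n^t}q^{-x\cdot y}K_y\in\mathfrak{u}_q(\mathcal{C})$. Then the map $\tau:\mathfrak{u}_q^{\mathcal{C}}\to\mathfrak{u}_q(\mathcal{C})$ defined on generators by $$\tau(e_x)=\epsilon_x,\qquad \tau(a(x,i))=\epsilon_x E_i,\qquad \tau(a(x,i)^* )=F_i\,\epsilon_x\qquad(x\in\mathbb{Z}_n^t,\ 1\le i\le t)$$ is a well-defined isomorphism of Hopf algebras.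
   Context: Notation: $\mathbb{Z}_n=\mathbb{Z}/n\mathbb{Z}$; $c^i\in\mathbb{Z}_n^t$ is the $i$-th column of $\mathcal{C}$ reduced mod $n$; for $x\in\mathbb{Z}_n^t$, $x_i$ is its $i$-th coordinate, and $q^{m}$ for $m\in\mathbb{Z}_n$ is well defined since $q^n=1$. For $\alpha,\beta\in\mathbb{Z}_n^t$, $\alpha\cdot\beta=\sum_i\alpha_i\beta_i$. For an indeterminate $x$: $[m]_x=\frac{x^m-x^{-m}}{x-x^{-1}}$, $[m]!_x=[m]_x\cdots[1]_x$, $[0]!_x=1$, $\begin{bmatrix} m\\ s\end{bmatrix}_x=\frac{[m]!_x}{[s]!_x[m-s]!_x}$. $K_y=K_1^{y_1}\cdots K_t^{y_t}$. $\mathfrak{u}_q(\mathcal{C})$: the $k$-algebra generated by $K_i,E_i,F_i$ ($1\le i\le t$) with relations $K_i^n=1$, $K_iK_j=K_jK_i$; $K_iE_jK_i^{-1}=q^{a_{ij}}E_j$, $K_iF_jK_i^{-1}=q^{-a_{ij}}F_j$; $E_iF_j-F_jE_i=\delta_{ij}\frac{K_i-K_i^{-1}}{q-q^{-1}}$; $E_i^\ell=0=F_i^\ell$; and for $i\neq j$, $\sum_{s=0}^{1-a_{ij}}(-1)^s\begin{bmatrix}1-a_{ij}\\ s\end{bmatrix}_qE_i^{1-a_{ij}-s}E_jE_i^s=0$ and the same with $F$ in place of $E$. Hopf structure: $\Delta(K_i)=K_i\otimes K_i$, $\Delta(E_i)=E_i\otimes1+K_i\otimes E_i$, $\Delta(F_i)=F_i\otimes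 K_i^{-1}+1\otimes F_i$, $\varepsilon(K_i)=1$, $\varepsilon(E_i)=\varepsilon(F_i)=0$, $S(K_i)=K_i^{-1}$, $S(E_i)=-K_i^{-1}E_i$, $S(F_i)=-F_iK_i$. Quiver: $\overline{\mathcal{Q}}$ has vertex set $\mathbb{Z}_n^t$ and arrows $a(x,i):x-c^i\to x$ and $a(x,i)^*:x\to x-c^i$ for $x\in\mathbb{Z}_n^t$, $1\le i\le t$. In the path algebra $k\overline{\mathcal{Q}}$ paths are composed right to left (the product $pp'$ of paths is their concatenation if the source of $p$ equals the target of $p'$, and $0$ otherwise); $e_x$ is the trivial path at $x$, so $e_xa(x,i)=a(x,i)e_{x-c^i}=a(x,i)$ and $a(x,i)^*e_x=e_{x-c^i}a(x,i)^*=a(x,i)^*$. Write $a(x,i_1i_2\cdots i_s)=a(x,i_1)a(x-c^{i_1},i_2)\cdots a(x-c^{i_1}-\cdots-c^{i_{s-1}},i_s)$, and $a(x,i_1\cdots i_s)^*=a(x-c^{i_1}-\cdots-c^{i_{s-1}},i_s)^*\cdots a(x-c^{i_1},i_2)^*a(x,i_1)^*$ (the reversed path); $a(x,i^s)$ denotes $a(x,i\cdots i)$ with $s$ letters $i$, and $a(x,i^0)=e_x$. For $i\neq j$ let $\kappa=1-a_{ij}$ and $\omega_{ij}(x)=\sum_{t=0}^{\kappa}(-1)^t\begin{bmatrix}\kappa\\ t\end{bmatrix}_q a(x,i^{\kappa-t}\,j\,i^t)$, $\omega_{ij}(x)^*=\sum_{t=0}^{\kappa}(-1)^t\begin{bmatrix}\kappa\\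 t\end{bmatrix}_q a(x,i^{\kappa-t}\,j\,i^t)^*$. $\mathfrak{u}_q^{\mathcal{C}}$: the quotient of $k\overline{\mathcal{Q}}$ by the ideal generated by, for all $x\in\mathbb{Z}_n^t$ and $i\ne j$: $a(x,i)a(x,i)^*-a(x+c^i,i)^*a(x+c^i,i)-\frac{q^{x_i}-q^{-x_i}}{q-q^{-1}}e_x$ (also for all $i$), $a(x,j)^*a(x,i)-a(x-c^j,i)a(x-c^i,j)^*$, $a(x,i^\ell)$, $a(x,i^\ell)^*$, $\omega_{ij}(x)$, $\omega_{ij}(x)^*$. It is a Hopf algebra with $\Delta(e_x)=\sum_{u+v=x}e_u\otimes e_v$, $\Delta(a(x,i))=\sum_{u+v=x}q^{u_i}e_u\otimes a(v,i)+\sum_{u+v=x}a(u,i)\otimes e_v$, $\Delta(a(x,i)^* )=\sum_{u+v=x}e_u\otimes a(v,i)^*+\sum_{u+v=x}q^{-v_i}a(u,i)^*\otimes e_v$, $\varepsilon(e_0)=1$, $\varepsilon(e_x)=0$ for $x\ne0$, $\varepsilon(a(x,i))=\varepsilon(a(x,i)^* )=0$, $S(e_x)=e_{-x}$, $S(a(x,i))=-q^{x_i-2}a(-x+c^i,i)$, $S(a(x,i)^* )=-q^{-x_i+2}a(-x+c^i,i)^*$. *)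

(* Defs.v *)
From HB Require Import structures.
From mathcomp Require Import all_boot all_order all_algebra.
Set Implicit Arguments. Unset Strict Implicit. Unset Printing Implicit Defensive.
Import Order.TTheory GRing.Theory Num.Theory.
Local Open Scope ring_scope.

Section QG.
Variable k : fieldType.

Definition alg_hom (A B : algType k) (f : A -> B) :=
  [/\ forall (c : k) x y, f (c *: x + y) = c *: f x + f y,
      f 1 = 1 & forall x y, f (x * y) = f x * f y].

Definition alg_char (A : algType k) (f : A -> k) :=
  [/\ forall (c : k) x y, f (c *: x + y) = c * f x + f y,
      f 1 = 1 & forall x y, f (x * y) = f x * f y].

Definition alg_antihom (A : algType k) (f : A -> A) :=
  [/\ forall (c : k) x y, f (c *: x + y) = c *: f x + f y,
      f 1 = 1 & forall x y, f (x * y) = f y * f x].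

(* (T, i1, i2) is the tensor product algebra A (x) A, with i1 a = a (x) 1 and
   i2 a = 1 (x) a, characterised by its universal property: algebra maps out of
   A (x) A correspond to pairs of algebra maps out of A with commuting images. *)
Definition is_tensor_square (A T : algType k) (i1 i2 : A -> T) :=
  [/\ alg_hom i1, alg_hom i2, (forall a b, i1 a * i2 b = i2 b * i1 a),
      (forall (B : algType k) (f g : A -> B), alg_hom f -> alg_hom g ->
         (forall a b, f a * g b = g b * f a) ->
         exists2 phi : T -> B, alg_hom phi &
           forall a, phi (i1 a) = f a /\ phi (i2 a) = g a) &
      (forall (B : algType k) (phi psi : T -> B), alg_hom phi -> alg_hom psi ->
         (forall a, phi (i1 a) = psi (i1 a) /\ phi (i2 a) = psi (i2 a)) ->
         forall x, phi x = psi x)].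

Definition qint (q : k) (m : nat) : k := (q ^+ m - q ^- m) / (q - q^-1).
Definition qfact (q : k) (m : nat) : k := \prod_(1 <= s < m.+1) qint q s.
Definition qbinom (q : k) (m s : nat) : k :=
  qfact q m / (qfact q s * qfact q (m - s)).

(* Cartan matrix of a finite-dimensional semisimple simply laced Lie algebra:
   a symmetric generalized Cartan matrix with off-diagonal entries in {0,-1}
   that is positive definite (i.e. of finite type, types ADE). *)
Definition simply_laced_cartan (t : nat) (C : 'M[int]_t) :=
  (forall i, C i i = 2) /\ (forall i j, i != j -> C i j = 0 \/ C i j = -1) /\ (C^T = C) /\ (forall v : 'rV[rat]_t, v != 0 ->
        0 < (v *m map_mx (fun z : int => z%:~R : rat) C *m v^T) 0 0).

Definition ell (n : nat) : nat := if odd n then n else n./2.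

(* Z_n^t, as row vectors over 'Z_n (n >= 5 in the theorem, so 'Z_n = Z/nZ) *)
Definition vert (n t : nat) := 'rV['Z_n]_t.

Definition ccol (n t : nat) (C : 'M[int]_t) (i : 'I_t) : vert n t :=
  \row_j ((C j i)%:~R : 'Z_n).

Definition dotZ (n t : nat) (x y : vert n t) : 'Z_n := \sum_i x 0 i * y 0 i.

Definition qpow (q : k) (n : nat) (m : 'Z_n) : k := q ^+ (m : nat).

Definition qintZ (q : k) (n : nat) (m : 'Z_n) : k :=
  (qpow q m - qpow q (- m)) / (q - q^-1).

Section Uq.
Variables (q : k) (n t : nat) (C : 'M[int]_t) (B : algType k).

Definition serre (X : 'I_t -> B) (i j : 'I_t) : B :=
  let kappa := `|1 - C i j|%N in
  \sum_(0 <= s < kappa.+1)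
     ((-1) ^+ s * qbinom q kappa s) *: (X i ^+ (kappa - s) * X j * X i ^+ s).

(* K_i^{-1} = K_i^{n-1} since K_i^n = 1 *)
Definition uq_rels (K E F : 'I_t -> B) :=
  (forall i, K i ^+ n = 1) /\
  (forall i j, K i * K j = K j * K i) /\
  (forall i j, K i * E j * K i ^+ n.-1 = (q ^ (C i j)) *: E j) /\
  (forall i j, K i * F j * K i ^+ n.-1 = (q ^ (- C i j)) *: F j) /\
  (forall i j, E i * F j - F j * E i =
         if i == j then (q - q^-1)^-1 *: (K i - K i ^+ n.-1) else 0) /\
  (forall i, E i ^+ ell n = 0 /\ F i ^+ ell n = 0) /\
  (forall i j, i != j -> serre E i j = 0 /\ serre F i j = 0).

Definition Kpow (K : 'I_t -> B) (y : vert n t) : B :=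
  \prod_(i < t) K i ^+ (y 0 i : nat).

Definition epsx (K : 'I_t -> B) (x : vert n t) : B :=
  ((n ^ t)%:R : k)^-1 *: \sum_(y : vert n t) qpow q (- dotZ x y) *: Kpow K y.
End Uq.

(* (U, K, E, F) is the algebra u_q(C) : generated by K, E, F subject to uq_rels,
   and universal for this property. *)
Definition is_uq (q : k) (n t : nat) (C : 'M[int]_t) (U : algType k)
  (K E F : 'I_t -> U) :=
  uq_rels q n C K E F /\
  forall (B : algType k) (K' E' F' : 'I_t -> B), uq_rels q n C K' E' F' ->
    (exists2 phi : U -> B, alg_hom phi &
        forall i, [/\ phi (K i) = K' i, phi (E i) = E' i & phi (F i) = F' i]) /\
    (forall phi psi : U -> B, alg_hom phi -> alg_hom psi ->
        (forall i, [/\ phi (K i) = psi (K i), phi (E i) = psi (E i)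
                     & phi (F i) = psi (F i)]) ->
        forall u, phi u = psi u).

Section UqC.
Variables (q : k) (n t : nat) (C : 'M[int]_t) (B : algType k).
Variables (e : vert n t -> B) (a as_ : vert n t -> 'I_t -> B).
Local Notation c := (ccol n C).

Fixpoint pathA (x : vert n t) (w : seq 'I_t) : B :=
  if w is i :: w' then a x i * pathA (x - c i) w' else e x.
Fixpoint pathS (x : vert n t) (w : seq 'I_t) : B :=
  if w is i :: w' then pathS (x - c i) w' * as_ x i else e x.

Definition omega (P : vert n t -> seq 'I_t -> B) (x : vert n t) (i j : 'I_t) : B :=
  let kappa := `|1 - C i j|%N in
  \sum_(0 <= s < kappa.+1)
    ((-1) ^+ s * qbinom q kappa s) *: P x (nseq (kappa - s) i ++ j :: nseq s i).

Definition uqC_rels :=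
  (* path algebra of the finite double quiver: vertices = orthogonal
     idempotents summing to 1, arrows a(x,i) : x - c^i -> x and
     a(x,i)^* : x -> x - c^i, paths composed right to left *)
  (forall x y, e x * e y = if x == y then e x else 0) /\
  (\sum_(x : vert n t) e x = 1) /\
  (forall x i, [/\ e x * a x i = a x i, a x i * e (x - c i) = a x i,
                  e (x - c i) * as_ x i = as_ x i & as_ x i * e x = as_ x i]) /\
  (forall x i, a x i * as_ x i - as_ (x + c i) i * a (x + c i) i
                 = qintZ q (x 0 i) *: e x) /\
  (forall x i j, i != j -> as_ x j * a x i = a (x - c j) i * as_ (x - c i) j) /\
  (forall x i, pathA x (nseq (ell n) i) = 0 /\ pathS x (nseq (ell n) i) = 0) /\
  (forall x i j, i != j -> omega pathA x i j = 0 /\ omega pathS x i j = 0).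
End UqC.

Definition is_uqC (q : k) (n t : nat) (C : 'M[int]_t) (V : algType k)
  (e : vert n t -> V) (a as_ : vert n t -> 'I_t -> V) :=
  uqC_rels q C e a as_ /\
  forall (B : algType k) (e' : vert n t -> B) (a' as' : vert n t -> 'I_t -> B),
    uqC_rels q C e' a' as' ->
    (exists2 phi : V -> B, alg_hom phi &
        (forall x, phi (e x) = e' x) /\
        (forall x i, phi (a x i) = a' x i /\ phi (as_ x i) = as' x i)) /\
    (forall phi psi : V -> B, alg_hom phi -> alg_hom psi ->
        (forall x, phi (e x) = psi (e x)) ->
        (forall x i, phi (a x i) = psi (a x i) /\ phi (as_ x i) = psi (as_ x i)) ->
        forall v, phi v = psi v).

Definition uq_hopf (n t : nat) (U TU : algType k) (K E F : 'I_t -> U)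
  (i1 i2 : U -> TU) (D : U -> TU) (eps : U -> k) (S : U -> U) :=
  alg_hom D /\ alg_char eps /\ alg_antihom S /\
  (forall i, [/\ D (K i) = i1 (K i) * i2 (K i),
                 D (E i) = i1 (E i) + i1 (K i) * i2 (E i) &
                 D (F i) = i1 (F i) * i2 (K i ^+ n.-1) + i2 (F i)]) /\
  (forall i, [/\ eps (K i) = 1, eps (E i) = 0 & eps (F i) = 0]) /\
  (forall i, [/\ S (K i) = K i ^+ n.-1, S (E i) = - (K i ^+ n.-1 * E i)
                & S (F i) = - (F i * K i)]).

Definition uqC_hopf (q : k) (n t : nat) (C : 'M[int]_t) (V TV : algType k)
  (e : vert n t -> V) (a as_ : vert n t -> 'I_t -> V)
  (i1 i2 : V -> TV) (D : V -> TV) (eps : V -> k) (S : V -> V) :=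
  alg_hom D /\ alg_char eps /\ alg_antihom S /\
  (forall x, D (e x) = \sum_(u : vert n t) i1 (e u) * i2 (e (x - u))) /\
  (forall x i, D (a x i) =
      \sum_(u : vert n t) qpow q (u 0 i) *: (i1 (e u) * i2 (a (x - u) i))
    + \sum_(u : vert n t) i1 (a u i) * i2 (e (x - u))) /\
  (forall x i, D (as_ x i) =
      \sum_(u : vert n t) i1 (e u) * i2 (as_ (x - u) i)
    + \sum_(u : vert n t) qpow q (- (x - u) 0 i) *: (i1 (as_ u i) * i2 (e (x - u)))) /\
  (forall x i, [/\ eps (e x) = (if x == 0 then 1 else 0),
                   eps (a x i) = 0 & eps (as_ x i) = 0]) /\
  (forall x i, [/\ S (e x) = e (- x),
      S (a x i) = - (qpow q (x 0 i - 2%:R) *: a (- x + ccol n C i) i) &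
      S (as_ x i) = - (qpow q (- x 0 i + 2%:R) *: as_ (- x + ccol n C i) i)]).

End QG.

(* Main.v *)
Require Import Defs.
From HB Require Import structures.
From mathcomp Require Import all_boot all_order all_algebra.
Import Order.TTheory GRing.Theory Num.Theory.
Local Open Scope ring_scope.
Set Implicit Arguments. Unset Strict Implicit. Unset Printing Implicit Defensive.

Section Arith.
Variables (k : fieldType) (m : nat) (q : k).
Hypothesis Hq : (m.+2).-primitive_root q.
Local Notation N := m.+2.
Variable t : nat.
Local Notation vt := (vert N t).

Lemma qpowD (a b : 'Z_N) : qpow q (a + b) = qpow q a * qpow q b.
Proof. by rewrite /qpow -exprD -(prim_expr_mod Hq (a + b)%N). Qed.

Lemma qpow0 : qpow q (0 : 'Z_N) = 1.
Proof. by rewrite /qpow expr0. Qed.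

Lemma q_neq0 : q != 0.
Proof.
apply/eqP => q0; have := prim_expr_order Hq; rewrite q0 expr0n /= => /eqP.
by rewrite eq_sym oner_eq0.
Qed.

Lemma qpow_neq0 (a : 'Z_N) : qpow q a != 0.
Proof. by rewrite /qpow expf_neq0 // q_neq0. Qed.

Lemma qpowN (a : 'Z_N) : qpow q (- a) = (qpow q a)^-1.
Proof.
apply: (mulIf (qpow_neq0 a)); rewrite -qpowD addNr qpow0 mulVf //; exact: qpow_neq0.
Qed.

Lemma qpowB (a b : 'Z_N) : qpow q (a - b) = qpow q a / qpow q b.
Proof. by rewrite qpowD qpowN. Qed.

Lemma qpow1 : qpow q (1 : 'Z_N) = q.
Proof. by rewrite /qpow expr1. Qed.

Lemma qpowMn (a : 'Z_N) j : qpow q (a *+ j) = qpow q a ^+ j.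
Proof. elim: j => [|j IH]; by rewrite ?mulr0n ?qpow0 ?expr0 // mulrS qpowD IH exprS. Qed.

Lemma qpowM (a b : 'Z_N) : qpow q (a * b) = qpow q a ^+ b.
Proof. by rewrite -qpowMn -mulr_natr natr_Zp. Qed.

Lemma qpowz (z : int) : qpow q (z%:~R : 'Z_N) = q ^ z.
Proof.
case: z => j; first by rewrite -pmulrn qpowMn qpow1.
by rewrite NegzE rmorphN /= -pmulrn qpowN qpowMn qpow1 exprnN.
Qed.

Lemma qpowX (a : 'Z_N) : qpow q a ^+ N.-1 = qpow q (- a).
Proof.
rewrite qpowN; apply: (mulIf (qpow_neq0 a)); rewrite mulVf ?qpow_neq0 // -exprSr /=.
by rewrite /qpow -exprM mulnC exprM (prim_expr_order Hq) expr1n.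
Qed.

Lemma qpow_eq1 (a : 'Z_N) : qpow q a = 1 -> a = 0.
Proof.
move/eqP; rewrite /qpow -(expr0 q) (eq_prim_root_expr Hq) mod0n => /eqP.
by rewrite modn_small // => H; apply/val_inj.
Qed.

Lemma qpow_sum I (r : seq I) (P : pred I) (F : I -> 'Z_N) :
  qpow q (\sum_(i <- r | P i) F i) = \prod_(i <- r | P i) qpow q (F i).
Proof. exact: (big_morph _ qpowD qpow0). Qed.

Lemma dotZDl (x y z : vt) : dotZ (x + y) z = dotZ x z + dotZ y z.
Proof. by rewrite /dotZ -big_split; apply: eq_bigr => i _; rewrite mxE mulrDl. Qed.
Lemma dotZC (x y : vt) : dotZ x y = dotZ y x.
Proof. by rewrite /dotZ; apply: eq_bigr => i _; rewrite mulrC. Qed.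
Lemma dotZDr (x y z : vt) : dotZ z (x + y) = dotZ z x + dotZ z y.
Proof. by rewrite !(dotZC z) dotZDl. Qed.
Lemma dotZNl (x y : vt) : dotZ (- x) y = - dotZ x y.
Proof. by rewrite /dotZ -sumrN; apply: eq_bigr => i _; rewrite mxE mulNr. Qed.
Lemma dotZNr (x y : vt) : dotZ y (- x) = - dotZ y x.
Proof. by rewrite !(dotZC y) dotZNl. Qed.
Lemma dotZBl (x y z : vt) : dotZ (x - y) z = dotZ x z - dotZ y z.
Proof. by rewrite dotZDl dotZNl. Qed.
Lemma dotZBr (x y z : vt) : dotZ z (x - y) = dotZ z x - dotZ z y.
Proof. by rewrite dotZDr dotZNr. Qed.
Lemma dotZ0l (y : vt) : dotZ 0 y = 0.
Proof. by rewrite /dotZ big1 // => i _; rewrite mxE mul0r. Qed.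
Lemma dotZ0r (y : vt) : dotZ y 0 = 0.
Proof. by rewrite dotZC dotZ0l. Qed.

Definition dlt (i : 'I_t) : vt := delta_mx 0 i.

Lemma dotZ_dlt (x : vt) i : dotZ x (dlt i) = x 0 i.
Proof.
rewrite /dotZ (bigD1 i) //= big1 ?addr0 => [|j /negbTE ji]; rewrite /dlt mxE eqxx /=.
  by rewrite eqxx mulr1.
by rewrite ji mulr0.
Qed.

Lemma card_vt : #|{: vt}| = (N ^ t)%N.
Proof. by rewrite card_mx card_ord mul1n. Qed.

Lemma Nt_neq0 : ((N ^ t)%:R : k) != 0.
Proof. by rewrite natrX expf_neq0 // (prim_root_natf_neq0 Hq). Qed.

Lemma char_sum (x : vt) :
  \sum_(y : vt) qpow q (dotZ x y) = if x == 0 then (N ^ t)%:R else 0.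
Proof.
case: eqP => [->|/eqP xn0].
  under eq_bigr do rewrite dotZ0l qpow0.
  by rewrite sumr_const card_vt.
case: (pickP (fun i => x 0 i != 0)) => [i xi|H]; last first.
  by case/eqP: xn0; apply/rowP => i; rewrite mxE; move/negbFE/eqP: (H i).
set S := (X in X = _).
have HS : S = qpow q (x 0 i) * S.
  rewrite /S {1}(reindex_inj (addIr (dlt i))) /= mulr_sumr; apply: eq_bigr => y _.
  by rewrite dotZDr qpowD dotZ_dlt mulrC.
have : (1 - qpow q (x 0 i)) * S = 0 by rewrite mulrBl mul1r -HS subrr.
move/eqP; rewrite mulf_eq0 subr_eq0 => /orP[/eqP/esym/qpow_eq1|/eqP //].
by move/eqP: xi.
Qed.

Lemma char_sum' (x z : vt) :
  \sum_(y : vt) qpow q (- dotZ x y) * qpow q (dotZ z y)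
   = if z == x then (N ^ t)%:R else 0.
Proof.
rewrite -subr_eq0 -char_sum; apply: eq_bigr => y _.
by rewrite -qpowD dotZBl addrC.
Qed.

End Arith.

Section AlgHom.
Variables (k : fieldType) (A B : algType k) (f : A -> B).
Hypothesis Hf : alg_hom f.

Lemma ahD x y : f (x + y) = f x + f y.
Proof. have [H _ _] := Hf; have := H 1 x y; rewrite !scale1r. done. Qed.
Lemma ah0 : f 0 = 0.
Proof. by apply: (addrI (f 0)); rewrite addr0 -ahD addr0. Qed.
Lemma ahZ c x : f (c *: x) = c *: f x.
Proof. have [H _ _] := Hf; have := H c x 0; rewrite !addr0 ah0 addr0. done. Qed.
Lemma ahN x : f (- x) = - f x.
Proof. by rewrite -scaleN1r ahZ scaleN1r. Qed.
Lemma ahB x y : f (x - y) = f x - f y.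
Proof. by rewrite ahD ahN. Qed.
Lemma ah_sum I (r : seq I) (P : pred I) (F : I -> A) :
  f (\sum_(i <- r | P i) F i) = \sum_(i <- r | P i) f (F i).
Proof. exact: (big_morph _ ahD ah0). Qed.
Lemma ahM x y : f (x * y) = f x * f y.
Proof. by have [_ _ H] := Hf. Qed.
Lemma ah1 : f 1 = 1.
Proof. by have [_ H _] := Hf. Qed.
Lemma ahX x p : f (x ^+ p) = f x ^+ p.
Proof. by elim: p => [|p IH]; rewrite ?expr0 ?ah1 // !exprS ahM IH. Qed.
Lemma ah_prod I (r : seq I) (P : pred I) (F : I -> A) :
  f (\prod_(i <- r | P i) F i) = \prod_(i <- r | P i) f (F i).
Proof. exact: (big_morph _ ahM ah1). Qed.
End AlgHom.

Lemma alg_hom_id (k : fieldType) (A : algType k) : alg_hom (@id A).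
Proof. by []. Qed.

Lemma alg_hom_comp (k : fieldType) (A B D : algType k) (f : A -> B) (g : B -> D) :
  alg_hom f -> alg_hom g -> alg_hom (g \o f).
Proof.
move=> Hf Hg; split => [c x y|//=|x y] /=.
- by rewrite (ahD Hf) (ahZ Hf) (ahD Hg) (ahZ Hg).
- by rewrite (ah1 Hf) (ah1 Hg).
- by rewrite (ahM Hf) (ahM Hg).
Qed.

Lemma alg_char_hom (k : fieldType) (A : algType k) (f : A -> k) :
  alg_char f -> alg_hom (f : A -> k^o).
Proof. by move=> [H1 H2 H3]; split. Qed.

Definition opp_ {k : fieldType} (A : algType k) : Type := A^c.
Section Opp.
Variables (k : fieldType) (A : algType k).
HB.instance Definition _ := GRing.NzRing.on (opp_ A).
HB.instance Definition _ := GRing.Lmodule.copy (opp_ A) A.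
Lemma opp_scalerAl (a : k) (u v : opp_ A) : a *: (u * v) = ((a *: u : opp_ A) * v : opp_ A).
Proof. exact (@scalerAr k A a v u). Qed.
HB.instance Definition _ := GRing.Lmodule_isLalgebra.Build k (opp_ A) opp_scalerAl.
Lemma opp_scalerAr (a : k) (u v : opp_ A) : a *: (u * v) = (u * (a *: v : opp_ A) : opp_ A).
Proof. exact (@scalerAl k A a v u). Qed.
HB.instance Definition _ := GRing.Lalgebra_isAlgebra.Build k (opp_ A) opp_scalerAr.
End Opp.

Lemma alg_antihom_hom (k : fieldType) (A B : algType k) (f : A -> B) :
  (forall (c : k) x y, f (c *: x + y) = c *: f x + f y) -> f 1 = 1 ->
  (forall x y, f (x * y) = f y * f x) -> alg_hom (f : A -> opp_ B).
Proof. by move=> H1 H2 H3; split. Qed.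

Section Gen.
Variable (k : fieldType).

Lemma prod_split (A : algType k) I (r : seq I) (a b : I -> A) :
  (forall i j, b i * a j = a j * b i) ->
  \prod_(i <- r) (a i * b i) = \prod_(i <- r) a i * \prod_(i <- r) b i.
Proof.
move=> Hc; elim: r => [|h r IH]; first by rewrite !big_nil mulr1.
rewrite !big_cons IH -!mulrA; congr (_ * _); rewrite !mulrA; congr (_ * _).
by apply: commr_prod => j _; exact: Hc.
Qed.

Lemma prod_twist (A : algType k) I (r : seq I) (a : I -> A) (c : I -> k) (X : A) :
  (forall i, a i * X = c i *: (X * a i)) ->
  \prod_(i <- r) a i * X = (\prod_(i <- r) c i) *: (X * \prod_(i <- r) a i).
Proof.
move=> H; elim: r => [|h r IH]; first by rewrite !big_nil mul1r mulr1 scale1r.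
rewrite !big_cons -mulrA IH -scalerAr (mulrA (a h)) H -scalerAl scalerA mulrA.
by rewrite [c h * _]mulrC.
Qed.

Lemma expr_twist (A : algType k) (a X : A) (c : k) p :
  a * X = c *: (X * a) -> a ^+ p * X = c ^+ p *: (X * a ^+ p).
Proof.
move=> H; elim: p => [|p IH]; first by rewrite !expr0 mul1r mulr1 scale1r.
by rewrite {1}exprSr -mulrA H -scalerAr (mulrA (a ^+ p)) IH -scalerAl scalerA -mulrA -exprSr -exprS.
Qed.

Lemma expr_eig (A : algType k) (a v : A) (c : k) p :
  a * v = c *: v -> a ^+ p * v = c ^+ p *: v.
Proof.
move=> H; elim: p => [|p IH]; first by rewrite !expr0 mul1r scale1r.
by rewrite exprS -mulrA IH -scalerAr H scalerA -exprSr.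
Qed.

Lemma prod_nseq (A : algType k) I (X : I -> A) l i :
  \prod_(j <- nseq l i) X j = X i ^+ l.
Proof. by elim: l => [|l IH]; rewrite ?big_nil ?expr0 // big_cons IH exprS. Qed.

Lemma prod_word (A : algType k) I (X : I -> A) p s i j :
  \prod_(l <- nseq p i ++ j :: nseq s i) X l = X i ^+ p * X j * X i ^+ s.
Proof. by rewrite big_cat big_cons /= !prod_nseq mulrA. Qed.

Lemma prod_rword (A : algType k) I (X : I -> A) p s i j :
  \prod_(l <- rev (nseq p i ++ j :: nseq s i)) X l = X i ^+ s * X j * X i ^+ p.
Proof.
by rewrite rev_cat rev_cons !rev_nseq -cats1 -catA big_cat /= big_cons /= !prod_nseq mulrA.
Qed.

Lemma qbinom_sym (q : k) kap s : (s <= kap)%N -> qbinom q kap (kap - s) = qbinom q kap s.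
Proof. by move=> hs; rewrite /qbinom subKn // [qfact q (kap - s) * _]mulrC. Qed.

Lemma serre_rev (A : algType k) (q : k) kap (x y : A) :
  \sum_(0 <= s < kap.+1) ((-1) ^+ s * qbinom q kap s) *: (x ^+ s * y * x ^+ (kap - s))
  = (-1) ^+ kap *:
    \sum_(0 <= s < kap.+1) ((-1) ^+ s * qbinom q kap s) *: (x ^+ (kap - s) * y * x ^+ s).
Proof.
rewrite big_nat_rev /= add0n scaler_sumr; apply: eq_big_nat => s /andP[_]; rewrite ltnS => hs.
rewrite subSS subKn // scalerA qbinom_sym //; congr (_ *: _).
rewrite mulrA; congr (_ * _).
rewrite -{2}(subnK hs) exprD -mulrA -exprMn mulrNN mulr1 expr1n mulr1 //.
Qed.

End Gen.

Section UPart.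
Variables (k : fieldType) (m : nat) (q : k).
Hypothesis Hq : (m.+2).-primitive_root q.
Local Notation N := m.+2.
Variables (t : nat) (C : 'M[int]_t) (U : algType k) (K E F : 'I_t -> U).
Hypothesis HR : uq_rels q N C K E F.
Local Notation vt := (vert N t).
Local Notation c := (ccol N C).
Local Notation inv := (((N ^ t)%:R : k)^-1).
Local Notation eps := (@epsx _ q N t U K).
Local Notation Kp := (@Kpow _ N t U K).

Lemma KN i : K i ^+ N = 1. Proof. by case: HR. Qed.
Lemma Kcomm i j : K i * K j = K j * K i. Proof. by case: HR => _ []. Qed.

Lemma KE i j : K i * E j = q ^ (C i j) *: (E j * K i).
Proof.
case: HR => _ [_ [H _]]; have := congr1 (fun z => z * K i) (H i j).
by rewrite -mulrA -exprSr prednK // KN mulr1 -scalerAl.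
Qed.

Lemma KF i j : K i * F j = q ^ (- C i j) *: (F j * K i).
Proof.
case: HR => _ [_ [_ [H _]]]; have := congr1 (fun z => z * K i) (H i j).
by rewrite -mulrA -exprSr prednK // KN mulr1 -scalerAl.
Qed.

Lemma Kp0 : Kp 0 = 1.
Proof. by rewrite /Kpow big1 // => i _; rewrite mxE expr0. Qed.

Lemma KXmod i (a : nat) : K i ^+ (a %% N) = K i ^+ a.
Proof. exact: expr_mod (KN i). Qed.

Lemma KpD y z : Kp (y + z) = Kp y * Kp z.
Proof.
rewrite /Kpow -prod_split; last by move=> i j; apply/commrX/esym/commrX/Kcomm.
by apply: eq_bigr => i _; rewrite mxE /= KXmod exprD.
Qed.

Lemma prod_single (I : finType) (X : I -> U) i :
  (forall j, j != i -> X j = 1) -> \prod_(j : I) X j = X i.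
Proof.
move=> H.
suff S : forall r : seq I, uniq r -> \prod_(j <- r) X j = if i \in r then X i else 1.
  by rewrite S ?index_enum_uniq // mem_index_enum.
elim=> [|h r IH] /=; first by rewrite big_nil.
case/andP => hr ur; rewrite big_cons IH // in_cons.
case: (eqVneq h i) => [hi|hi]; last by rewrite H // mul1r.
by subst h; rewrite (negbTE hr) mulr1.
Qed.

Lemma Kp_dlt i : Kp (dlt m i) = K i.
Proof.
rewrite /Kpow (prod_single (i := i)) => [|j ji]; rewrite /dlt mxE eqxx /=.
  by rewrite eqxx expr1.
by rewrite (negbTE ji) expr0.
Qed.

Lemma dotZ_col (y : vt) j : dotZ y (c j) = \sum_i y 0 i * (C i j)%:~R.
Proof. by apply: eq_bigr => i _; rewrite mxE. Qed.

Lemma KpE y j : Kp y * E j = qpow q (dotZ y (c j)) *: (E j * Kp y).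
Proof.
rewrite /Kpow (@prod_twist _ _ _ _ _ (fun i => (q ^ (C i j)) ^+ (y 0 i : nat))).
  rewrite dotZ_col (qpow_sum Hq); congr (_ *: _); apply: eq_bigr => i _.
  by rewrite mulrC (qpowM Hq) (qpowz Hq).
by move=> i; apply: expr_twist; apply: KE.
Qed.

Lemma KpF y j : Kp y * F j = qpow q (- dotZ y (c j)) *: (F j * Kp y).
Proof.
rewrite /Kpow (@prod_twist _ _ _ _ _ (fun i => (q ^ (- C i j)) ^+ (y 0 i : nat))).
  rewrite dotZ_col -sumrN (qpow_sum Hq); congr (_ *: _); apply: eq_bigr => i _.
  by rewrite -mulrN mulrC (qpowM Hq) -rmorphN (qpowz Hq).
by move=> i; apply: expr_twist; apply: KF.
Qed.

Lemma epsE' x : eps x = inv *: \sum_(y : vt) qpow q (- dotZ x y) *: Kp y.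
Proof. by []. Qed.

Lemma Kp_eps z x : Kp z * eps x = qpow q (dotZ x z) *: eps x.
Proof.
rewrite !epsE' -scalerAr mulr_sumr scalerA mulrC -scalerA; congr (_ *: _).
rewrite [in RHS](reindex_inj (addrI z)) scaler_sumr; apply: eq_bigr => y _.
rewrite -scalerAr -KpD scalerA -(qpowD Hq); congr (qpow q _ *: _).
by rewrite dotZDr opprD addrA subrr add0r.
Qed.

Lemma inv_Nt : inv * (N ^ t)%:R = 1.
Proof. by rewrite mulVf // (Nt_neq0 Hq t). Qed.

Lemma eps_mul x y : eps x * eps y = if x == y then eps x else 0.
Proof.
rewrite {1}epsE' -scalerAl mulr_suml.
under eq_bigr do rewrite -scalerAl Kp_eps scalerA.
rewrite -scaler_suml (char_sum' Hq) scalerA eq_sym.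
case: eqP => [->|_]; first by rewrite inv_Nt scale1r.
by rewrite mulr0 scale0r.
Qed.

Lemma eps_sum : \sum_(x : vt) eps x = 1.
Proof.
under eq_bigr do rewrite epsE'.
rewrite -scaler_sumr exchange_big /=.
under eq_bigr do rewrite -scaler_suml.
have H0 : forall y : vt, \sum_(x : vt) qpow q (- dotZ x y)
    = if y == 0 then ((N ^ t)%:R : k) else 0.
  move=> y; rewrite -oppr_eq0 -(char_sum Hq); apply: eq_bigr => x _.
  by rewrite dotZNl dotZC.
under eq_bigr do rewrite H0.
rewrite (bigD1 0) //= eqxx big1 => [|y /negbTE ->]; last by rewrite scale0r.
by rewrite addr0 Kp0 scalerA inv_Nt scale1r.
Qed.

Lemma char_sum2 (y z : vt) :
  \sum_(x : vt) qpow q (dotZ x z) * qpow q (- dotZ x y)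
   = if z == y then (N ^ t)%:R else 0.
Proof.
rewrite -(char_sum' Hq); apply: eq_bigr => x _; by rewrite mulrC !(dotZC x).
Qed.

Lemma fourier z : \sum_(x : vt) qpow q (dotZ x z) *: eps x = Kp z.
Proof.
under eq_bigr do rewrite epsE' scalerA mulrC -scalerA scaler_sumr.
rewrite -scaler_sumr exchange_big /=.
under eq_bigr do under eq_bigr do rewrite scalerA.
under eq_bigr do rewrite -scaler_suml char_sum2.
rewrite (bigD1 z) //= eqxx big1 ?addr0 => [|y yz]; last by rewrite eq_sym (negbTE yz) scale0r.
by rewrite scalerA inv_Nt scale1r.
Qed.

Lemma K_eps i x : K i * eps x = qpow q (x 0 i) *: eps x.
Proof. by rewrite -Kp_dlt Kp_eps dotZ_dlt. Qed.

Lemma Kinv_eps i x : K i ^+ N.-1 * eps x = qpow q (- x 0 i) *: eps x.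
Proof. by rewrite (expr_eig _ (K_eps i x)) (qpowX Hq). Qed.

Lemma eps_E x j : eps x * E j = E j * eps (x - c j).
Proof.
rewrite !epsE' -scalerAl -scalerAr mulr_suml mulr_sumr; congr (_ *: _).
apply: eq_bigr => y _; rewrite -scalerAl KpE scalerA -scalerAr -(qpowD Hq).
by congr (qpow q _ *: _); rewrite dotZBl opprB addrC (dotZC y).
Qed.

Lemma eps_F x j : eps x * F j = F j * eps (x + c j).
Proof.
rewrite !epsE' -scalerAl -scalerAr mulr_suml mulr_sumr; congr (_ *: _).
apply: eq_bigr => y _; rewrite -scalerAl KpF scalerA -scalerAr -(qpowD Hq).
by congr (qpow q _ *: _); rewrite dotZDl opprD (dotZC y).
Qed.

Lemma eps_idem x : eps x * eps x = eps x.
Proof. by rewrite eps_mul eqxx. Qed.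

Definition aU (x : vt) i := eps x * E i.
Definition asU (x : vt) i := F i * eps x.

Lemma pathA_U x w : pathA C eps aU x w = eps x * \prod_(j <- w) E j.
Proof.
elim: w x => [|i w IH] x /=; first by rewrite big_nil mulr1.
by rewrite IH big_cons /aU mulrA -(mulrA (eps x)) -eps_E mulrA eps_idem mulrA.
Qed.

Lemma pathS_U x w : pathS C eps asU x w = \prod_(j <- rev w) F j * eps x.
Proof.
elim: w x => [|i w IH] x /=; first by rewrite big_nil mul1r.
rewrite IH rev_cons -cats1 big_cat /= big_cons big_nil mulr1 /asU.
by rewrite -mulrA (mulrA (eps _)) eps_F subrK -mulrA eps_idem mulrA.
Qed.

Lemma EF i j : E i * F j - F j * E i =
  if i == j then (q - q^-1)^-1 *: (K i - K i ^+ N.-1) else 0.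
Proof. by case: HR => _ [_ [_ [_ [H _]]]]. Qed.

Lemma serre_E i j : i != j -> serre q C E i j = 0.
Proof. by case: HR => _ [_ [_ [_ [_ [_ H]]]]] /H []. Qed.
Lemma serre_F i j : i != j -> serre q C F i j = 0.
Proof. by case: HR => _ [_ [_ [_ [_ [_ H]]]]] /H []. Qed.

Lemma uqC_rels_U : uqC_rels q C eps aU asU.
Proof.
split; first exact: eps_mul.
split; first exact: eps_sum.
split.
  move=> x i; rewrite /aU /asU; split.
  - by rewrite mulrA eps_idem.
  - by rewrite -mulrA -eps_E mulrA eps_idem.
  - by rewrite mulrA eps_F subrK -mulrA eps_idem.
  - by rewrite -mulrA eps_idem.
split.
  move=> x i; rewrite /aU /asU.
  have h1 : eps x * E i * (F i * eps x) = E i * F i * eps x.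
    by rewrite eps_E -mulrA (mulrA (eps _)) eps_F subrK -mulrA eps_idem mulrA.
  have h2 : F i * eps (x + c i) * (eps (x + c i) * E i) = F i * E i * eps x.
    by rewrite -mulrA (mulrA (eps _)) eps_idem eps_E addrK mulrA.
  rewrite h1 h2 -mulrBl EF eqxx -scalerAl mulrBl Kinv_eps K_eps -scalerBl scalerA.
  by rewrite /qintZ mulrC.
split.
  move=> x i j ij; rewrite /aU /asU.
  have L : F j * eps x * (eps x * E i) = F j * E i * eps (x - c i).
    by rewrite -mulrA (mulrA (eps x)) eps_idem eps_E mulrA.
  have R : eps (x - c j) * E i * (F j * eps (x - c i)) = E i * F j * eps (x - c i).
    by rewrite eps_E -mulrA (mulrA (eps _)) eps_F addrAC subrK -mulrA eps_idem mulrA.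
  rewrite L R; have := EF i j; rewrite (negbTE ij) => /eqP; rewrite subr_eq0 => /eqP ->.
  by [].
split.
  move=> x i; rewrite pathA_U pathS_U rev_nseq !prod_nseq.
  by case: HR => _ [_ [_ [_ [_ [H _]]]]]; case: (H i) => -> ->; rewrite mulr0 mul0r.
move=> x i j ij; split; rewrite /omega.
  under eq_bigr do rewrite pathA_U prod_word scalerAr.
  by rewrite -mulr_sumr -[X in _ * X]/(serre q C E i j) serre_E // mulr0.
under eq_bigr do rewrite pathS_U prod_rword scalerAl.
rewrite -mulr_suml serre_rev -[X in _ *: X]/(serre q C F i j) serre_F //.
by rewrite scaler0 mul0r.
Qed.

End UPart.

Lemma sum_if (k : fieldType) (W : lmodType k) (T : finType) (x : T) (F : T -> W) :
  \sum_(y : T) (if y == x then F y else 0) = F x.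
Proof. by rewrite -big_mkcond big_pred1_eq. Qed.

Section VPart.
Variables (k : fieldType) (m : nat) (q : k).
Hypothesis Hq : (m.+2).-primitive_root q.
Local Notation N := m.+2.
Variables (t : nat) (C : 'M[int]_t) (V : algType k).
Local Notation vt := (vert N t).
Local Notation c := (ccol N C).
Variables (e : vt -> V) (a as_ : vt -> 'I_t -> V).
Hypothesis HV : uqC_rels q C e a as_.

Lemma e_mul x y : e x * e y = if x == y then e x else 0.
Proof. by case: HV. Qed.
Lemma e_sum : \sum_(x : vt) e x = 1.
Proof. by case: HV => _ []. Qed.
Lemma e_idem x : e x * e x = e x.
Proof. by rewrite e_mul eqxx. Qed.
Lemma ea x i : e x * a x i = a x i.
Proof. by case: HV => _ [_ [H _]]; case: (H x i). Qed.
Lemma ae x i : a x i * e (x - c i) = a x i.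
Proof. by case: HV => _ [_ [H _]]; case: (H x i). Qed.
Lemma eas x i : e (x - c i) * as_ x i = as_ x i.
Proof. by case: HV => _ [_ [H _]]; case: (H x i). Qed.
Lemma ase x i : as_ x i * e x = as_ x i.
Proof. by case: HV => _ [_ [H _]]; case: (H x i). Qed.
Lemma rel_comm x i : a x i * as_ x i - as_ (x + c i) i * a (x + c i) i
                 = qintZ q (x 0 i) *: e x.
Proof. by case: HV => _ [_ [_ [H _]]]. Qed.
Lemma rel_cross x i j : i != j -> as_ x j * a x i = a (x - c j) i * as_ (x - c i) j.
Proof. by case: HV => _ [_ [_ [_ [H _]]]]; apply: H. Qed.
Lemma rel_nil x i : pathA C e a x (nseq (ell N) i) = 0 /\ pathS C e as_ x (nseq (ell N) i) = 0.
Proof. by case: HV => _ [_ [_ [_ [_ [H _]]]]]. Qed.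
Lemma rel_omega x i j : i != j ->
  omega q C (pathA C e a) x i j = 0 /\ omega q C (pathS C e as_) x i j = 0.
Proof. by case: HV => _ [_ [_ [_ [_ [_ H]]]]]; apply: H. Qed.

Lemma e_a_mul y x i (P : V) : e y * (a x i * P) = if y == x then a x i * P else 0.
Proof.
rewrite -{1}ea !mulrA e_mul.
by case: ifP => [/eqP yx|_]; try subst y; rewrite ?ea ?mul0r.
Qed.
Lemma a_e_mul x i y (P : V) : a x i * (e y * P) = if y == x - c i then a x i * P else 0.
Proof.
rewrite -{1}ae !mulrA -(mulrA (a x i)) e_mul eq_sym.
by case: ifP => [/eqP yx|_]; try subst y; rewrite ?ae ?mulr0 ?mul0r.
Qed.
Lemma e_as_mul y x i (P : V) : e y * (as_ x i * P) = if y == x - c i then as_ x i * P else 0.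
Proof.
rewrite -{1}eas !mulrA e_mul.
by case: ifP => [/eqP yx|_]; try subst y; rewrite ?eas ?mul0r.
Qed.
Lemma as_e_mul x i y (P : V) : as_ x i * (e y * P) = if y == x then as_ x i * P else 0.
Proof.
rewrite -{1}ase !mulrA -(mulrA (as_ x i)) e_mul eq_sym.
by case: ifP => [/eqP yx|_]; try subst y; rewrite ?ase ?mulr0 ?mul0r.
Qed.

Definition Dg (f : vt -> k) : V := \sum_(x : vt) f x *: e x.

Lemma Dg_ext f g : f =1 g -> Dg f = Dg g.
Proof. by move=> H; apply: eq_bigr => x _; rewrite H. Qed.

Lemma Dg_e_mul f y P : Dg f * (e y * P) = f y *: (e y * P).
Proof.
rewrite /Dg mulr_suml -[RHS](sum_if y (fun z => f z *: (e y * P))).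
apply: eq_bigr => x _; rewrite -scalerAl mulrA e_mul.
by case: ifP => [/eqP yx|_]; try subst y; rewrite ?mul0r ?scaler0.
Qed.

Lemma Dg_mul f g : Dg f * Dg g = Dg (fun x => f x * g x).
Proof.
rewrite {2}/Dg mulr_sumr; apply: eq_bigr => x _.
by rewrite -scalerAr -[e x]mulr1 Dg_e_mul !mulr1 scalerA mulrC.
Qed.

Lemma Dg1 : Dg (fun _ => 1) = 1.
Proof. by rewrite /Dg -e_sum; apply: eq_bigr => x _; rewrite scale1r. Qed.

Lemma Dg_X f p : Dg f ^+ p = Dg (fun x => f x ^+ p).
Proof.
elim: p => [|p IH]; first by rewrite expr0 -Dg1; apply: Dg_ext => x; rewrite expr0.
by rewrite exprS IH Dg_mul; apply: Dg_ext => x; rewrite exprS.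
Qed.

Lemma Dg_prod I (r : seq I) (f : I -> vt -> k) :
  \prod_(i <- r) Dg (f i) = Dg (fun x => \prod_(i <- r) f i x).
Proof.
elim: r => [|h r IH]; first by rewrite big_nil -Dg1; apply: Dg_ext => x; rewrite big_nil.
by rewrite big_cons IH Dg_mul; apply: Dg_ext => x; rewrite big_cons.
Qed.

Lemma Dg_sum I (r : seq I) (f : I -> vt -> k) :
  \sum_(i <- r) Dg (f i) = Dg (fun x => \sum_(i <- r) f i x).
Proof.
rewrite /Dg exchange_big; apply: eq_bigr => x _; by rewrite scaler_suml.
Qed.

Lemma Dg_Z (b : k) f : b *: Dg f = Dg (fun x => b * f x).
Proof. by rewrite /Dg scaler_sumr; apply: eq_bigr => x _; rewrite scalerA. Qed.

Lemma Dg_B f g : Dg f - Dg g = Dg (fun x => f x - g x).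
Proof. by rewrite /Dg -sumrB; apply: eq_bigr => x _; rewrite scalerBl. Qed.

Lemma Dg_a f x i : Dg f * a x i = f x *: a x i.
Proof. by rewrite -ea Dg_e_mul. Qed.
Lemma a_Dg f x i : a x i * Dg f = f (x - c i) *: a x i.
Proof.
rewrite /Dg mulr_sumr -[RHS](sum_if (x - c i) (fun z => f z *: a x i)).
apply: eq_bigr => y _; rewrite -scalerAr -[e y]mulr1 a_e_mul mulr1.
by case: ifP => [/eqP yx|_]; try subst y; rewrite ?scaler0.
Qed.
Lemma Dg_as f x i : Dg f * as_ x i = f (x - c i) *: as_ x i.
Proof. by rewrite -eas Dg_e_mul. Qed.
Lemma as_Dg f x i : as_ x i * Dg f = f x *: as_ x i.
Proof.
rewrite /Dg mulr_sumr -[RHS](sum_if x (fun z => f z *: as_ x i)).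
apply: eq_bigr => y _; rewrite -scalerAr -[e y]mulr1 as_e_mul mulr1.
by case: ifP => [/eqP yx|_]; try subst y; rewrite ?scaler0.
Qed.

Definition K' i := Dg (fun x => qpow q (x 0 i)).
Definition E' i := \sum_(x : vt) a x i.
Definition F' i := \sum_(x : vt) as_ x i.

Lemma e_pathA x w : e x * pathA C e a x w = pathA C e a x w.
Proof. by case: w => [|i w] /=; rewrite ?e_idem // mulrA ea. Qed.
Lemma pathS_e x w : pathS C e as_ x w * e x = pathS C e as_ x w.
Proof. by case: w => [|i w] /=; rewrite ?e_idem // -mulrA ase. Qed.

Lemma prod_E' w : \prod_(j <- w) E' j = \sum_(x : vt) pathA C e a x w.
Proof.
elim: w => [|i w IH]; first by rewrite big_nil -e_sum.
rewrite big_cons IH /E' mulr_suml; apply: eq_bigr => y _ /=.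
rewrite mulr_sumr -[RHS](sum_if (y - c i) (fun x => a y i * pathA C e a x w)).
by apply: eq_bigr => x _; rewrite -{1}e_pathA a_e_mul.
Qed.

Lemma prod_F' w : \prod_(j <- rev w) F' j = \sum_(x : vt) pathS C e as_ x w.
Proof.
elim: w => [|i w IH]; first by rewrite big_nil -e_sum.
rewrite rev_cons -cats1 big_cat /= big_cons big_nil mulr1 IH /F' mulr_sumr.
apply: eq_bigr => y _ /=; rewrite mulr_suml.
rewrite -[RHS](sum_if (y - c i) (fun x => pathS C e as_ x w * as_ y i)).
apply: eq_bigr => x _; rewrite -{1}pathS_e -mulrA -[as_ y i]mulr1 e_as_mul mulr1.
by case: ifP => [/eqP xy|_]; rewrite ?mulr0 // mulr1.
Qed.

Lemma qpowXN (b : 'Z_N) : qpow q b ^+ N = 1.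
Proof. by rewrite /qpow exprAC (prim_expr_order Hq) expr1n. Qed.

Lemma ccolE i j : c j 0 i = (C i j)%:~R.
Proof. by rewrite mxE. Qed.

Lemma uq_rels_V : uq_rels q N C K' E' F'.
Proof.
split.
  move=> i; rewrite /K' Dg_X -Dg1; apply: Dg_ext => x; exact: qpowXN.
split.
  move=> i j; rewrite /K' !Dg_mul; apply: Dg_ext => x; exact: mulrC.
split.
  move=> i j; rewrite /E' scaler_sumr mulr_sumr mulr_suml; apply: eq_bigr => x _.
  rewrite /K' Dg_a -scalerAl Dg_X a_Dg scalerA (qpowX Hq) -(qpowD Hq) !mxE.
  by rewrite opprB addrCA subrr addr0 (qpowz Hq).
split.
  move=> i j; rewrite /F' scaler_sumr mulr_sumr mulr_suml; apply: eq_bigr => x _.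
  rewrite /K' Dg_as -scalerAl Dg_X as_Dg scalerA (qpowX Hq) -(qpowD Hq) !mxE.
  by rewrite addrAC subrr add0r -mulrNz (qpowz Hq).
split.
  move=> i j.
  have L : E' i * F' j = \sum_(x : vt) a x i * as_ (x - c i + c j) j.
    rewrite /E' /F' mulr_suml; apply: eq_bigr => x _; rewrite mulr_sumr.
    rewrite -[RHS](sum_if (x - c i + c j) (fun y => a x i * as_ y j)).
    by apply: eq_bigr => y _; rewrite -{1}eas a_e_mul subr_eq.
  have R : F' j * E' i = \sum_(y : vt) as_ y j * a y i.
    rewrite /E' /F' mulr_suml; apply: eq_bigr => y _; rewrite mulr_sumr.
    rewrite -[RHS](sum_if y (fun x => as_ y j * a x i)).
    by apply: eq_bigr => x _; rewrite -{1}ea as_e_mul.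
  rewrite L R; case: eqP => [<-|/eqP ij].
    rewrite [X in _ - X](reindex_inj (addIr (c i))) /= -sumrB.
    under eq_bigr do rewrite subrK rel_comm.
    rewrite /K' Dg_X Dg_B Dg_Z; apply: eq_bigr => x _; congr (_ *: _).
    by rewrite (qpowX Hq) /qintZ mulrC.
  rewrite [X in _ - X](reindex_inj (addIr (c j))) /= -sumrB big1 // => x _.
  have E1 : x + c j - c j = x by rewrite addrK.
  have E2 : x + c j - c i = x - c i + c j by rewrite addrAC.
  by rewrite rel_cross // E1 E2 subrr.
split.
  move=> i; rewrite -(prod_nseq E') -(prod_nseq F') -{2}rev_nseq.
  rewrite prod_E' prod_F'; split; apply: big1 => x _; by case: (rel_nil x i).
move=> i j ij; split.
  rewrite /serre.
  under eq_bigr do rewrite -(prod_word E') prod_E' scaler_sumr.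
  rewrite exchange_big big1 //= => x _; by case: (rel_omega x ij).
have H : (-1) ^+ `|1 - C i j|%N *: serre q C F' i j = 0.
  rewrite /serre -serre_rev.
  under eq_bigr do rewrite -(prod_rword F') prod_F' scaler_sumr.
  rewrite exchange_big big1 //= => x _; by case: (rel_omega x ij).
have := congr1 (fun z => (-1) ^+ `|1 - C i j|%N *: z) H.
by rewrite scalerA -exprD -signr_odd oddD addbb expr0 scale1r scaler0.
Qed.

End VPart.

Section GDiag.
Variables (k : fieldType) (m t : nat) (W : algType k).
Local Notation N := m.+2.
Local Notation vt := (vert N t).
Variable (e : vt -> W).
Hypothesis He1 : forall x y, e x * e y = if x == y then e x else 0.
Hypothesis He2 : \sum_(x : vt) e x = 1.

Definition GDg (f : vt -> k) : W := \sum_(x : vt) f x *: e x.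

Lemma GDg_ext f g : f =1 g -> GDg f = GDg g.
Proof. by move=> H; apply: eq_bigr => x _; rewrite H. Qed.

Lemma GDg_e f y : GDg f * e y = f y *: e y.
Proof.
rewrite /GDg mulr_suml -[RHS](sum_if y (fun z => f z *: e y)).
apply: eq_bigr => x _; rewrite -scalerAl He1.
by case: ifP => [/eqP xy|_]; [subst x|]; rewrite ?scaler0.
Qed.

Lemma e_GDg f y : e y * GDg f = f y *: e y.
Proof.
rewrite /GDg mulr_sumr -[RHS](sum_if y (fun z => f z *: e y)).
apply: eq_bigr => x _; rewrite -scalerAr He1 eq_sym.
by case: ifP => [/eqP xy|_]; [subst x|]; rewrite ?scaler0.
Qed.

Lemma GDg_mul f g : GDg f * GDg g = GDg (fun x => f x * g x).
Proof.
rewrite {2}/GDg mulr_sumr; apply: eq_bigr => x _.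
by rewrite -scalerAr GDg_e scalerA mulrC.
Qed.

Lemma GDg1 : GDg (fun _ => 1) = 1.
Proof. by rewrite /GDg -He2; apply: eq_bigr => x _; rewrite scale1r. Qed.

Lemma GDg_X f p : GDg f ^+ p = GDg (fun x => f x ^+ p).
Proof.
elim: p => [|p IH]; first by rewrite expr0 -GDg1; apply: GDg_ext => x; rewrite expr0.
by rewrite exprS IH GDg_mul; apply: GDg_ext => x; rewrite exprS.
Qed.

Lemma GDg_prod I (r : seq I) (f : I -> vt -> k) :
  \prod_(i <- r) GDg (f i) = GDg (fun x => \prod_(i <- r) f i x).
Proof.
elim: r => [|h r IH]; first by rewrite big_nil -GDg1; apply: GDg_ext => x; rewrite big_nil.
by rewrite big_cons IH GDg_mul; apply: GDg_ext => x; rewrite big_cons.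
Qed.

Lemma GDg_of (X : W) (f : vt -> k) : (forall x, X * e x = f x *: e x) -> X = GDg f.
Proof.
move=> H; rewrite -[X]mulr1 -He2 mulr_sumr; apply: eq_bigr => x _; exact: H.
Qed.

End GDiag.

Section Anti.
Variables (k : fieldType) (A B : algType k) (S : A -> B).
Hypotheses (HS1 : forall (c : k) x y, S (c *: x + y) = c *: S x + S y)
  (HS2 : S 1 = 1) (HS3 : forall x y, S (x * y) = S y * S x).
Let HSh : alg_hom (S : A -> opp_ B) := alg_antihom_hom HS1 HS2 HS3.

Lemma antiD x y : S (x + y) = S x + S y.
Proof. exact: (ahD HSh). Qed.
Lemma anti0 : S 0 = 0.
Proof. exact: (ah0 HSh). Qed.
Lemma antiZ c x : S (c *: x) = c *: S x.
Proof. exact: (ahZ HSh). Qed.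
Lemma antiN x : S (- x) = - S x.
Proof. exact: (ahN HSh). Qed.
Lemma anti_sum I (r : seq I) (P : pred I) (F : I -> A) :
  S (\sum_(i <- r | P i) F i) = \sum_(i <- r | P i) S (F i).
Proof. exact: (big_morph _ antiD anti0). Qed.
Lemma antiX x p : S (x ^+ p) = S x ^+ p.
Proof.
elim: p => [|p IH]; first by rewrite !expr0.
by rewrite exprS HS3 IH exprSr.
Qed.
Lemma anti_prod_comm I (r : seq I) (X : I -> A) :
  (forall i j, S (X i) * S (X j) = S (X j) * S (X i)) ->
  S (\prod_(i <- r) X i) = \prod_(i <- r) S (X i).
Proof.
move=> Hc; elim: r => [|h r IH]; first by rewrite !big_nil.
rewrite !big_cons HS3 IH; apply/esym/commr_prod => j _; exact: Hc.
Qed.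
End Anti.

Lemma alg_hom_opp (k : fieldType) (A B : algType k) (f : A -> B) :
  alg_hom f -> alg_hom (f : opp_ A -> opp_ B).
Proof.
move=> Hf; split => [c x y|//=|x y].
- exact: (ahD Hf _ _) || (have [H _ _] := Hf; exact: H).
- exact: (ah1 Hf).
- exact: (ahM Hf y x).
Qed.

Section Tensor.
Variables (k : fieldType) (A T : algType k) (i1 i2 : A -> T).
Hypothesis HT : is_tensor_square i1 i2.
Definition bil (x y : A) := i1 x * i2 y.
Let h1 : alg_hom i1. Proof. by case: HT. Qed.
Let h2 : alg_hom i2. Proof. by case: HT. Qed.
Let hc : forall x y, i1 x * i2 y = i2 y * i1 x. Proof. by case: HT. Qed.

Lemma bilM x y z w : bil x y * bil z w = bil (x * z) (y * w).
Proof.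
by rewrite /bil mulrA -(mulrA (i1 x)) -hc mulrA -(ahM h1) -mulrA -(ahM h2).
Qed.
Lemma bil11 : bil 1 1 = 1.
Proof. by rewrite /bil (ah1 h1) (ah1 h2) mulr1. Qed.
Lemma i1_bil x : i1 x = bil x 1.
Proof. by rewrite /bil (ah1 h2) mulr1. Qed.
Lemma i2_bil x : i2 x = bil 1 x.
Proof. by rewrite /bil (ah1 h1) mul1r. Qed.
Lemma bilZl c x y : bil (c *: x) y = c *: bil x y.
Proof. by rewrite /bil (ahZ h1) scalerAl. Qed.
Lemma bilZr c x y : bil x (c *: y) = c *: bil x y.
Proof. by rewrite /bil (ahZ h2) scalerAr. Qed.
Lemma bilDl x y z : bil (x + y) z = bil x z + bil y z.
Proof. by rewrite /bil (ahD h1) mulrDl. Qed.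
Lemma bilDr x y z : bil x (y + z) = bil x y + bil x z.
Proof. by rewrite /bil (ahD h2) mulrDr. Qed.
Lemma bil_suml I (r : seq I) (F : I -> A) y :
  bil (\sum_(i <- r) F i) y = \sum_(i <- r) bil (F i) y.
Proof. by rewrite /bil (ah_sum h1) mulr_suml. Qed.
Lemma bil_sumr I (r : seq I) (F : I -> A) x :
  bil x (\sum_(i <- r) F i) = \sum_(i <- r) bil x (F i).
Proof. by rewrite /bil (ah_sum h2) mulr_sumr. Qed.
Lemma bilX x y p : bil x y ^+ p = bil (x ^+ p) (y ^+ p).
Proof.
elim: p => [|p IH]; first by rewrite !expr0 bil11.
by rewrite exprS IH bilM -!exprS.
Qed.
Lemma bil_prod I (r : seq I) (F G : I -> A) :
  \prod_(i <- r) bil (F i) (G i) = bil (\prod_(i <- r) F i) (\prod_(i <- r) G i).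
Proof.
elim: r => [|h r IH]; first by rewrite !big_nil bil11.
by rewrite !big_cons IH bilM.
Qed.
End Tensor.

Section Char.
Variables (k : fieldType) (A : algType k) (f : A -> k).
Hypothesis Hf : alg_char f.
Let h := alg_char_hom Hf.
Lemma chZ c x : f (c *: x) = c * f x.
Proof. exact: (ahZ h). Qed.
Lemma ch_sum I (r : seq I) (F : I -> A) : f (\sum_(i <- r) F i) = \sum_(i <- r) f (F i).
Proof. exact: (ah_sum h). Qed.
Lemma chM x y : f (x * y) = f x * f y.
Proof. exact: (ahM h). Qed.
Lemma chX x p : f (x ^+ p) = f x ^+ p.
Proof. exact: (ahX h). Qed.
Lemma ch_prod I (r : seq I) (F : I -> A) : f (\prod_(i <- r) F i) = \prod_(i <- r) f (F i).
Proof. exact: (ah_prod h). Qed.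
End Char.

Section Main.
Variables (k : fieldType) (m : nat) (q : k).
Hypothesis Hq : (m.+2).-primitive_root q.
Local Notation N := m.+2.
Variables (t : nat) (C : 'M[int]_t).
Local Notation vt := (vert N t).
Local Notation c := (ccol N C).
Variables (U : algType k) (K E F : 'I_t -> U).
Hypothesis HRU : uq_rels q N C K E F.
Variables (V : algType k) (e : vt -> V) (a as_ : vt -> 'I_t -> V).
Hypothesis HRV : uqC_rels q C e a as_.
Local Notation eps := (@epsx _ q N t U K).
Local Notation Kp := (@Kpow _ N t U K).
Local Notation inv := (((N ^ t)%:R : k)^-1).
Local Notation DgV := (Dg e).
Local Notation K'' := (K' q e).
Local Notation E'' := (E' a).
Local Notation F'' := (F' as_).

Lemma phi_Kp (phi : U -> V) : alg_hom phi -> (forall i, phi (K i) = K'' i) ->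
  forall y, phi (Kp y) = DgV (fun z => qpow q (dotZ z y)).
Proof.
move=> Hphi HK y; rewrite /Kpow (ah_prod Hphi).
under eq_bigr do rewrite (ahX Hphi) HK /K' (Dg_X HRV).
rewrite (Dg_prod HRV); apply: Dg_ext => z; rewrite /dotZ (qpow_sum Hq).
by apply: eq_bigr => i _; rewrite (qpowM Hq).
Qed.

Lemma phi_eps (phi : U -> V) : alg_hom phi -> (forall i, phi (K i) = K'' i) ->
  forall x, phi (eps x) = e x.
Proof.
move=> Hphi HK x; rewrite epsE' (ahZ Hphi) (ah_sum Hphi).
under eq_bigr do rewrite (ahZ Hphi) (phi_Kp Hphi HK) Dg_Z.
rewrite Dg_sum Dg_Z /Dg.
rewrite [RHS](_ : e x = \sum_z (if z == x then 1 *: e z else 0)); last by rewrite sum_if scale1r.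
apply: eq_bigr => z _; rewrite (char_sum' Hq).
case: ifP => [/eqP zx|_]; [subst z; by rewrite (inv_Nt Hq)|by rewrite mulr0 scale0r].
Qed.

Lemma sig_tau (sig : U -> V) : alg_hom sig ->
  (forall i, [/\ sig (K i) = K'' i, sig (E i) = E'' i & sig (F i) = F'' i]) ->
  forall x i, [/\ sig (eps x) = e x, sig (eps x * E i) = a x i
                & sig (F i * eps x) = as_ x i].
Proof.
move=> Hs HG; have HK : forall i, sig (K i) = K'' i by move=> i; case: (HG i).
move=> x i; have He := phi_eps Hs HK x.
split => //; rewrite (ahM Hs) He.
  case: (HG i) => _ -> _; rewrite /E' mulr_sumr.
  rewrite [RHS](_ : a x i = \sum_y (if y == x then a y i else 0)); last by rewrite sum_if.
  by apply: eq_bigr => y _; rewrite -[a y i]mulr1 (e_a_mul HRV) mulr1 eq_sym.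
case: (HG i) => _ _ ->; rewrite /F' mulr_suml.
rewrite [RHS](_ : as_ x i = \sum_y (if y == x then as_ y i else 0)); last by rewrite sum_if.
by apply: eq_bigr => y _; rewrite -[e x]mulr1 (as_e_mul HRV) mulr1 eq_sym.
Qed.

Lemma tau_sig (tau : V -> U) : alg_hom tau ->
  (forall x i, [/\ tau (e x) = eps x, tau (a x i) = eps x * E i
                & tau (as_ x i) = F i * eps x]) ->
  forall i, [/\ tau (K'' i) = K i, tau (E'' i) = E i & tau (F'' i) = F i].
Proof.
move=> Ht HG i; split.
- rewrite /K' /Dg (ah_sum Ht).
  have -> : \sum_(x : vt) tau (qpow q (x 0 i) *: e x)
           = \sum_(x : vt) qpow q (dotZ x (dlt m i)) *: eps x.
    by apply: eq_bigr => x _; rewrite (ahZ Ht) dotZ_dlt; case: (HG x i) => -> _ _.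
  by rewrite (fourier Hq) Kp_dlt.
- rewrite /E' (ah_sum Ht).
  have -> : \sum_(x : vt) tau (a x i) = \sum_(x : vt) eps x * E i.
    by apply: eq_bigr => x _; case: (HG x i) => _ -> _.
  by rewrite -mulr_suml (eps_sum Hq) mul1r.
- rewrite /F' (ah_sum Ht).
  have -> : \sum_(x : vt) tau (as_ x i) = \sum_(x : vt) F i * eps x.
    by apply: eq_bigr => x _; case: (HG x i) => _ _ ->.
  by rewrite -mulr_sumr (eps_sum Hq) mulr1.
Qed.



Lemma epsU_eps (epsU : U -> k) : alg_char epsU -> (forall i, epsU (K i) = 1) ->
  forall x, epsU (eps x) = if x == 0 then 1 else 0.
Proof.
move=> He HK x; rewrite epsE' (chZ He) (ch_sum He).
have HKp : forall y, epsU (Kp y) = 1.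
  by move=> y; rewrite /Kpow (ch_prod He) big1 // => i _; rewrite (chX He) HK expr1n.
under eq_bigr do rewrite (chZ He) HKp mulr1 -dotZNl.
rewrite (char_sum Hq) oppr_eq0; case: ifP => _; last by rewrite mulr0.
by rewrite mulVf // (Nt_neq0 Hq t).
Qed.

Local Notation GU := (GDg eps).
Let em := eps_mul Hq HRU.
Let es := eps_sum Hq K.

Lemma K_GU i : K i = GU (fun z => qpow q (z 0 i)).
Proof. apply: (@GDg_of k m t U eps (eps_sum Hq K)) => x; exact: (K_eps Hq HRU). Qed.
Lemma Kinv_GU i : K i ^+ N.-1 = GU (fun z => qpow q (- z 0 i)).
Proof. apply: (@GDg_of k m t U eps (eps_sum Hq K)) => x; exact: (Kinv_eps Hq HRU). Qed.
Lemma eps_K x i : eps x * K i = qpow q (x 0 i) *: eps x.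
Proof. by rewrite K_GU (e_GDg em). Qed.

Lemma SU_eps (SU : U -> U) : alg_antihom SU -> (forall i, SU (K i) = K i ^+ N.-1) ->
  forall x, SU (eps x) = eps (- x).
Proof.
move=> [H1 H2 H3] HK x.
have HKp : forall y, SU (Kp y) = Kp (- y).
  move=> y; rewrite -(fourier Hq K (- y)) /Kpow (anti_prod_comm H2 H3); last first.
    move=> i j; rewrite !(antiX H2 H3) !HK !Kinv_GU !(GDg_X em es).
    by rewrite !(GDg_mul em); apply: GDg_ext => z; rewrite mulrC.
  under eq_bigr do rewrite (antiX H2 H3) HK Kinv_GU (GDg_X em es).
  rewrite (GDg_prod em es); apply: eq_bigr => z _.
  congr (_ *: _); rewrite dotZNr /dotZ -sumrN (qpow_sum Hq); apply: eq_bigr => i _.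
  by rewrite -(qpowM Hq) mulNr.
rewrite !epsE' (antiZ H1 H2 H3) (anti_sum H1 H2 H3); congr (_ *: _).
rewrite [RHS](reindex_inj (@oppr_inj _)) /=; apply: eq_bigr => y _.
by rewrite (antiZ H1 H2 H3) HKp dotZNl dotZNr opprK.
Qed.



Lemma two_Z : ((2%:Z)%:~R : 'Z_N) = 2%:R.
Proof. by []. Qed.

Lemma SU_aU (SU : U -> U) : alg_antihom SU ->
  (forall i, [/\ SU (K i) = K i ^+ N.-1, SU (E i) = - (K i ^+ N.-1 * E i)
                & SU (F i) = - (F i * K i)]) ->
  (forall i, C i i = 2) ->
  forall x i, SU (eps x * E i) = - (qpow q (x 0 i - 2%:R) *: (eps (- x + c i) * E i)).
Proof.
move=> HS HSg HC2 x i; have [H1 H2 H3] := HS.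
have HK : forall i, SU (K i) = K i ^+ N.-1 by move=> j; case: (HSg j).
rewrite H3 (SU_eps HS HK); case: (HSg i) => _ -> _.
have EE : E i * eps (- x) = eps (- x + c i) * E i by rewrite (eps_E Hq HRU) addrK.
rewrite mulNr -mulrA EE mulrA (Kinv_eps Hq HRU) -scalerAl; congr (- (_ *: _)).
by congr (qpow q _); rewrite !mxE HC2 two_Z opprD opprK.
Qed.

Lemma SU_asU (SU : U -> U) : alg_antihom SU ->
  (forall i, [/\ SU (K i) = K i ^+ N.-1, SU (E i) = - (K i ^+ N.-1 * E i)
                & SU (F i) = - (F i * K i)]) ->
  (forall i, C i i = 2) ->
  forall x i, SU (F i * eps x) = - (qpow q (- x 0 i + 2%:R) *: (F i * eps (- x + c i))).
Proof.
move=> HS HSg HC2 x i; have [H1 H2 H3] := HS.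
have HK : forall i, SU (K i) = K i ^+ N.-1 by move=> j; case: (HSg j).
rewrite H3 (SU_eps HS HK); case: (HSg i) => _ _ ->.
rewrite mulrN mulrA (eps_F Hq HRU) -mulrA eps_K -scalerAr; congr (- (_ *: _)).
by congr (qpow q _); rewrite !mxE HC2 two_Z.
Qed.

Lemma sum_swap3 (W : lmodType k) (I J L : finType) (f : I -> k) (g : I -> J -> L -> k)
  (B : J -> L -> W) :
  \sum_(y : I) f y *: \sum_(z : J) \sum_(w : L) g y z w *: B z w
  = \sum_(z : J) \sum_(w : L) (\sum_(y : I) f y * g y z w) *: B z w.
Proof.
under eq_bigr do rewrite scaler_sumr.
under eq_bigr do under eq_bigr do rewrite scaler_sumr.
rewrite exchange_big; apply: eq_bigr => z _; rewrite exchange_big.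
apply: eq_bigr => w _; rewrite scaler_suml; apply: eq_bigr => y _; by rewrite scalerA.
Qed.

Section Cop.
Variables (TU : algType k) (iU1 iU2 : U -> TU) (DU : U -> TU).
Hypothesis HTU : is_tensor_square iU1 iU2.
Hypothesis HD : alg_hom DU.
Hypothesis HDg : forall i, [/\ DU (K i) = iU1 (K i) * iU2 (K i),
                 DU (E i) = iU1 (E i) + iU1 (K i) * iU2 (E i) &
                 DU (F i) = iU1 (F i) * iU2 (K i ^+ N.-1) + iU2 (F i)].
Local Notation bl := (bil iU1 iU2).

Lemma DU_Kp y : DU (Kp y) = bl (Kp y) (Kp y).
Proof.
rewrite /Kpow (ah_prod HD) -(bil_prod HTU); apply: eq_bigr => i _.
rewrite (ahX HD) -(bilX HTU); congr (_ ^+ _); by case: (HDg i).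
Qed.

Lemma Kp_expand y : bl (Kp y) (Kp y) =
  \sum_(z : vt) \sum_(w : vt) (qpow q (dotZ z y) * qpow q (dotZ w y)) *: bl (eps z) (eps w).
Proof.
rewrite -(fourier Hq K y) (bil_suml HTU); apply: eq_bigr => z _.
rewrite (bilZl HTU) (bil_sumr HTU) scaler_sumr; apply: eq_bigr => w _.
by rewrite (bilZr HTU) scalerA.
Qed.

Lemma DU_eps x : DU (eps x) = \sum_(u : vt) bl (eps u) (eps (x - u)).
Proof.
rewrite epsE' (ahZ HD) (ah_sum HD).
under eq_bigr do rewrite (ahZ HD) DU_Kp Kp_expand.
rewrite sum_swap3 scaler_sumr; apply: eq_bigr => z _.
rewrite scaler_sumr.
rewrite [RHS](_ : _ = \sum_(w : vt) (if w == x - z then bl (eps z) (eps w) else 0));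
  last by rewrite sum_if.
apply: eq_bigr => w _; rewrite scalerA.
have -> : \sum_(y : vt) qpow q (- dotZ x y) * (qpow q (dotZ z y) * qpow q (dotZ w y))
          = \sum_(y : vt) qpow q (- dotZ x y) * qpow q (dotZ (z + w) y).
  by apply: eq_bigr => y _; rewrite dotZDl (qpowD Hq).
rewrite (char_sum' Hq).
have -> : (z + w == x) = (w == x - z).
  by apply/eqP/eqP => H; [rewrite -H [z + w]addrC addrK | rewrite H [z + _]addrC subrK].
by case: ifP => _; rewrite ?(inv_Nt Hq) ?scale1r // mulr0 scale0r.
Qed.

Lemma DU_aU x i : DU (eps x * E i) =
  \sum_(u : vt) qpow q (u 0 i) *: bl (eps u) (eps (x - u) * E i)
  + \sum_(u : vt) bl (eps u * E i) (eps (x - u)).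
Proof.
rewrite (ahM HD) DU_eps; case: (HDg i) => _ -> _.
rewrite (i1_bil HTU) -/(bl (K i) (E i)) mulrDr !mulr_suml addrC.
congr (_ + _); apply: eq_bigr => u _; rewrite (bilM HTU (eps u)) ?mulr1 //.
by rewrite eps_K (bilZl HTU).
Qed.

Lemma DU_asU x i : DU (F i * eps x) =
  \sum_(u : vt) bl (eps u) (F i * eps (x - u))
  + \sum_(u : vt) qpow q (- (x - u) 0 i) *: bl (F i * eps u) (eps (x - u)).
Proof.
rewrite (ahM HD) DU_eps; case: (HDg i) => _ _ ->.
rewrite (i2_bil HTU (F i)) -/(bl (F i) (K i ^+ N.-1)) mulrDl !mulr_sumr addrC.
congr (_ + _); apply: eq_bigr => u _; rewrite (bilM HTU _ _ (eps u)) ?mul1r //.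
by rewrite (Kinv_eps Hq HRU) (bilZr HTU).
Qed.
End Cop.

End Main.

Lemma rels_hom (k : fieldType) (q : k) (n t : nat) (C : 'M[int]_t) (V B : algType k)
  (e : vert n t -> V) (a as_ : vert n t -> 'I_t -> V) (f : V -> B) :
  alg_hom f -> uqC_rels q C e a as_ ->
  uqC_rels q C (fun x => f (e x)) (fun x i => f (a x i)) (fun x i => f (as_ x i)).
Proof.
move=> Hf [R1 [R2 [R3 [R4 [R5 [R6 R7]]]]]].
have PA : forall x w, f (pathA C e a x w) = pathA C (fun x => f (e x)) (fun x i => f (a x i)) x w.
  by move=> x w; elim: w x => [|i w IH] x //=; rewrite (ahM Hf) IH.
have PS : forall x w, f (pathS C e as_ x w) = pathS C (fun x => f (e x)) (fun x i => f (as_ x i)) x w.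
  by move=> x w; elim: w x => [|i w IH] x //=; rewrite (ahM Hf) IH.
split.
  move=> x y; rewrite -(ahM Hf) R1; case: ifP => // _; exact: (ah0 Hf).
split; first by rewrite -(ah_sum Hf) R2 (ah1 Hf).
split.
  move=> x i; case: (R3 x i) => h1 h2 h3 h4.
  by split; rewrite -(ahM Hf) ?h1 ?h2 ?h3 ?h4.
split.
  by move=> x i; rewrite -!(ahM Hf) -(ahB Hf) R4 (ahZ Hf).
split.
  by move=> x i j ij; rewrite -!(ahM Hf) R5.
split.
  move=> x i; case: (R6 x i) => h1 h2; rewrite -PA -PS h1 h2 (ah0 Hf); by split.
move=> x i j ij; case: (R7 x i j ij) => h1 h2.
split; rewrite /omega.
  rewrite -[LHS](_ : f (omega q C (pathA C e a) x i j) = _); first by rewrite h1 (ah0 Hf).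
  rewrite /omega (ah_sum Hf); apply: eq_bigr => s _; by rewrite (ahZ Hf) PA.
rewrite -[LHS](_ : f (omega q C (pathS C e as_) x i j) = _); first by rewrite h2 (ah0 Hf).
rewrite /omega (ah_sum Hf); apply: eq_bigr => s _; by rewrite (ahZ Hf) PS.
Qed.

Lemma e_one (k : fieldType) (q : k) (m t : nat) (C : 'M[int]_t) (V : algType k)
  (e : vert m.+2 t -> V) (a as_ : vert m.+2 t -> 'I_t -> V) :
  uqC_rels q C e a as_ -> (forall i : 'I_t, False) -> forall x, e x = 1 /\ x = 0.
Proof.
move=> [_ [R2 _]] Ht x.
have Hx : forall y : vert m.+2 t, y = x by move=> y; apply/rowP => i; case: (Ht i).
split; last by rewrite (Hx 0).
rewrite -R2 (eq_bigr (fun _ => e x)) ?sumr_const; last by move=> y _; rewrite (Hx y).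
have t0 : #|'I_t| = 0%N by apply: eq_card0 => i; case: (Ht i).
by rewrite card_mx mul1n -(card_ord t) t0 expn0.
Qed.

Unset Implicit Arguments.

Theorem mainTheorem1 (k : fieldType) (n : nat) (q : k) (t : nat) (C : 'M[int]_t)
  (Hn : (5 <= n)%N) (Hq : n.-primitive_root q) (HC : simply_laced_cartan C)
  (* u_q(C), with its tensor square and Hopf structure *)
  (U TU : algType k) (K E F : 'I_t -> U) (HU : is_uq q n C K E F)
  (iU1 iU2 : U -> TU) (HTU : is_tensor_square iU1 iU2)
  (DU : U -> TU) (epsU : U -> k) (SU : U -> U)
  (HhU : uq_hopf n K E F iU1 iU2 DU epsU SU)
  (* u_q^C, with its tensor square and Hopf structure *)
  (V TV : algType k) (e : vert n t -> V) (a as_ : vert n t -> 'I_t -> V)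
  (HV : is_uqC q C e a as_)
  (iV1 iV2 : V -> TV) (HTV : is_tensor_square iV1 iV2)
  (DV : V -> TV) (epsV : V -> k) (SV : V -> V)
  (HhV : uqC_hopf q C e a as_ iV1 iV2 DV epsV SV) :
  exists tau : V -> U,
    (* tau is a well-defined algebra map with the prescribed values on generators *)
    alg_hom tau /\
    (forall x i, [/\ tau (e x) = epsx q K x,
                     tau (a x i) = epsx q K x * E i &
                     tau (as_ x i) = F i * epsx q K x]) /\
    (* it is bijective *)
    bijective tau /\
    (* it preserves the counit and the antipode *)
    (forall v, epsU (tau v) = epsV v) /\
    (forall v, SU (tau v) = tau (SV v)) /\
    (* it preserves the coproduct: D_U o tau = (tau (x) tau) o D_V, where
       tau (x) tau is the algebra map TV -> TU with (tau (x) tau) (iV1 v) = iU1 (tau v)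
       and (tau (x) tau) (iV2 v) = iU2 (tau v) *)
    (forall sigma : TV -> TU, alg_hom sigma ->
       (forall v, sigma (iV1 v) = iU1 (tau v) /\ sigma (iV2 v) = iU2 (tau v)) ->
       forall v, DU (tau v) = sigma (DV v)).
Proof.
have [m Hm] : exists m, n = m.+2 by exists n.-2; case: n Hn {Hq HU HhU HV HhV e a as_ HTV} => [|[|n']].
subst n.
have [HRU HUu] := HU; have [HRV HVu] := HV.
have [tau Htau [Hte Hta]] := (HVu U _ _ _ (uqC_rels_U Hq HRU)).1.
have [sig Hsig HsigG] := (HUu V _ _ _ (uq_rels_V Hq HRV)).1.
have HG : forall x i, [/\ tau (e x) = epsx q K x, tau (a x i) = epsx q K x * E i
                       & tau (as_ x i) = F i * epsx q K x].
  by move=> x i; case: (Hta x i) => -> ->; rewrite Hte.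
have HsK : forall i, sig (K i) = K' q e i by move=> i; case: (HsigG i).
have Hst : forall v, sig (tau v) = v.
  apply: ((HVu V _ _ _ HRV).2 (sig \o tau) id (alg_hom_comp Htau Hsig) (alg_hom_id _))
    => [x|x i] /=.
    by rewrite Hte (phi_eps Hq HRV Hsig HsK).
  case: (HG x i) => _ -> ->.
  by case: (sig_tau Hq HRV Hsig HsigG x i) => _ -> ->.
have Hts : forall u, tau (sig u) = u.
  apply: ((HUu U _ _ _ HRU).2 (tau \o sig) id (alg_hom_comp Hsig Htau) (alg_hom_id _))
    => i /=.
  case: (HsigG i) => -> -> ->.
  exact: (tau_sig Hq Htau HG i).
have [HDU [HeU [HSU [HDg [Heg HSg]]]]] := HhU.
have [HDV [HeV [HSV [HDVe [HDVa [HDVas [HeVg HSVg]]]]]]] := HhV.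
exists tau; split; first exact: Htau.
split; first exact: HG.
split; first by exists sig.
split.
  have Hk := rels_hom (alg_hom_comp Htau (alg_char_hom HeU)) HRV.
  have Hu := (HVu k^o _ _ _ Hk).2 (epsU \o tau : V -> k^o) (epsV : V -> k^o)
            (alg_hom_comp Htau (alg_char_hom HeU)) (alg_char_hom HeV).
  move=> v; apply: (Hu _ _ v) => [x|x i] /=.
    rewrite Hte (epsU_eps Hq HeU); last by move=> i; case: (Heg i).
    case: (pickP (fun _ : 'I_t => true)) => [i0 _|H0]; first by case: (HeVg x i0) => ->.
    have [-> ->] := e_one HRV (fun i => notF (esym (H0 i))) x.
    by rewrite eqxx (ah1 (alg_char_hom HeV)).
  case: (HG x i) => _ -> ->; case: (HeVg x i) => _ -> ->.
  case: (Heg i) => _ HE HF.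
  by rewrite !(chM HeU) HE HF mulr0 mul0r.
split.
  have [S1 S2 S3] := HSU; have [T1 T2 T3] := HSV.
  have Hk := rels_hom (alg_hom_comp Htau (alg_antihom_hom S1 S2 S3)) HRV.
  apply: ((HVu (opp_ U) _ _ _ Hk).2 (fun v => SU (tau v)) (fun v => tau (SV v))
            (alg_hom_comp Htau (alg_antihom_hom S1 S2 S3))
            (alg_hom_comp (alg_antihom_hom T1 T2 T3) (alg_hom_opp Htau))) => [x|x i] /=.
    have HK : forall i, SU (K i) = K i ^+ (m.+2).-1 by move=> i; case: (HSg i).
    rewrite Hte (SU_eps Hq HRU HSU HK).
    case: (pickP (fun _ : 'I_t => true)) => [i0 _|H0]; first by case: (HSVg x i0) => -> _ _; rewrite Hte.
    have [E1 x0] := e_one HRV (fun i => notF (esym (H0 i))) x; subst x.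
    by rewrite oppr0 -Hte E1 T2.
  case: (HSVg x i) => _ -> ->; rewrite !(ahN Htau) !(ahZ Htau).
  case: (HG x i) => _ -> ->; case: (HG (- x + ccol m.+2 C i) i) => _ -> ->.
  by rewrite (SU_aU Hq HRU HSU HSg HC.1) (SU_asU Hq HRU HSU HSg HC.1).
move=> sigma Hsg H12.
have Hk := rels_hom (alg_hom_comp Htau HDU) HRV.
apply: ((HVu TU _ _ _ Hk).2 (fun v => DU (tau v)) (fun v => sigma (DV v))
          (alg_hom_comp Htau HDU) (alg_hom_comp HDV Hsg)) => [x|x i] /=.
  rewrite Hte (DU_eps Hq HTU HDU HDg) HDVe (ah_sum Hsg); apply: eq_bigr => u _.
  by rewrite (ahM Hsg) (H12 _).1 (H12 _).2 !Hte.
split.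
  case: (HG x i) => _ -> _; rewrite (DU_aU Hq HRU HTU HDU HDg) HDVa (ahD Hsg) !(ah_sum Hsg).
  congr (_ + _); apply: eq_bigr => u _.
    by rewrite (ahZ Hsg) (ahM Hsg) (H12 _).1 (H12 _).2 Hte; case: (HG (x - u) i) => _ -> _.
  by rewrite (ahM Hsg) (H12 _).1 (H12 _).2 Hte; case: (HG u i) => _ -> _.
case: (HG x i) => _ _ ->; rewrite (DU_asU Hq HRU HTU HDU HDg) HDVas (ahD Hsg) !(ah_sum Hsg).
congr (_ + _); apply: eq_bigr => u _.
  by rewrite (ahM Hsg) (H12 _).1 (H12 _).2 Hte; case: (HG (x - u) i) => _ _ ->.
by rewrite (ahZ Hsg) (ahM Hsg) (H12 _).1 (H12 _).2 Hte; case: (HG u i) => _ _ ->.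
Qed.
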